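(* Let $R$ be a ring, $A$ an $R$-algebra, $I$ an ideal of $A$, and $f:A\to A'$ a homomorphism of $R$-algebras such that $A'$ is $I$-adically complete and separated and $A/I^n\to A'/I^nA'$ is étale for every $n\ge1$. Let $\alpha\in A$ be $I$-adically nilpotent and $\alpha'=f(\alpha)$. Then for every $\alpha$-derivation $\partial$ of $A$ over $R$ there exists a unique $\alpha'$-derivation $\partial'$ of $A'$ over $R$ with $\partial'\circ f=f\circ\partial$.
   Context: For a ring $R$, an $R$-algebra $A$ and $\alpha\in A$, an $\alpha$-derivation of $A$ over $R$ is an $R$-linear map $\partial:A\to A$ with $\partial(1)=0$ and $\partial(xy)=\partial(x)y+x\partial(y)+\alpha\partial(x)\partial(y)$ for all $x,y\in A$. *)

(* Defs.v *)
From HB Require Import structures.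
From mathcomp Require Import all_boot all_order all_algebra.
From mathcomp Require Import mpoly.
Set Implicit Arguments. Unset Strict Implicit. Unset Printing Implicit Defensive.
Import Order.TTheory GRing.Theory Num.Theory.
Local Open Scope ring_scope.

Definition is_ideal (A : comNzRingType) (I : A -> Prop) : Prop :=
  [/\ I 0, (forall x y, I x -> I y -> I (x + y)) & (forall a x, I x -> I (a * x))].

Fixpoint ideal_pow (A : comNzRingType) (I : A -> Prop) (n : nat) : A -> Prop :=
  match n with
  | 0 => fun _ => True
  | n'.+1 => fun x => exists s : seq (A * A),
      (forall p, p \in s -> ideal_pow I n' p.1 /\ I p.2) /\
      x = \sum_(p <- s) p.1 * p.2
  end.

Definition ext_ideal (A A' : comNzRingType) (f : A -> A') (J : A -> Prop) : A' -> Prop :=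
  fun y => exists s : seq (A * A'),
    (forall p, p \in s -> J p.1) /\ y = \sum_(p <- s) f p.1 * p.2.

Definition adically_separated (A A' : comNzRingType) (f : A -> A') (I : A -> Prop) : Prop :=
  forall y : A', (forall n, ext_ideal f (ideal_pow I n) y) -> y = 0.

Definition adically_complete (A A' : comNzRingType) (f : A -> A') (I : A -> Prop) : Prop :=
  forall x : nat -> A', (forall n, ext_ideal f (ideal_pow I n) (x n.+1 - x n)) ->
    exists y : A', forall n, ext_ideal f (ideal_pow I n) (y - x n).

Definition adically_nilpotent (A : comNzRingType) (I : A -> Prop) (alpha : A) : Prop :=
  forall m, exists k, ideal_pow I m (alpha ^+ k).

(* Ring maps out of A/I^n
   (resp. A'/I^nA') are ring maps out of A (resp. A') killing I^n (resp. I^nA'). *)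
Definition formally_etale_mod (A A' : comNzRingType) (f : {rmorphism A -> A'})
    (I : A -> Prop) (n : nat) : Prop :=
  forall (C D : comPzRingType) (pi : {rmorphism C -> D}),
    (forall d, exists c, pi c = d) ->
    (forall c c', pi c = 0 -> pi c' = 0 -> c * c' = 0) ->
    forall (u : {rmorphism A -> C}) (v : {rmorphism A' -> D}),
      (forall a, ideal_pow I n a -> u a = 0) ->
      (forall y, ext_ideal f (ideal_pow I n) y -> v y = 0) ->
      (forall a, pi (u a) = v (f a)) ->
      exists w : {rmorphism A' -> C},
        [/\ (forall y, ext_ideal f (ideal_pow I n) y -> w y = 0),
            (forall y, pi (w y) = v y),
            (forall a, w (f a) = u a) &
            (forall w' : {rmorphism A' -> C},
               (forall y, ext_ideal f (ideal_pow I n) y -> w' y = 0) ->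
               (forall y, pi (w' y) = v y) ->
               (forall a, w' (f a) = u a) -> forall y, w' y = w y)].

(* A'/I^nA' is a finitely presented A/I^n-algebra: there are t_1..t_k in A' and
   P_1..P_m in A[x_1..x_k] such that (A/I^n)[x]/(P) ~= A'/I^nA' via x_i |-> t_i,
   i.e. the evaluation A[x] -> A'/I^nA' is onto with kernel (P) + I^n A[x]. *)
Definition finitely_presented_mod (A A' : comNzRingType) (f : {rmorphism A -> A'})
    (I : A -> Prop) (n : nat) : Prop :=
  exists (k : nat) (t : 'I_k -> A') (m : nat) (P : 'I_m -> {mpoly A[k]}),
    (forall y : A', exists Q : {mpoly A[k]},
        ext_ideal f (ideal_pow I n) (y - mmap f t Q)) /\
    (forall Q : {mpoly A[k]},
        ext_ideal f (ideal_pow I n) (mmap f t Q) <->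
        exists (G : 'I_m -> {mpoly A[k]}) (H : {mpoly A[k]}),
          (forall mm, ideal_pow I n (H@_mm)) /\ Q = \sum_(j < m) G j * P j + H).

Definition etale_mod (A A' : comNzRingType) (f : {rmorphism A -> A'})
    (I : A -> Prop) (n : nat) : Prop :=
  formally_etale_mod f I n /\ finitely_presented_mod f I n.

Definition is_alpha_derivation (R : comPzRingType) (A : comAlgType R) (alpha : A)
    (d : A -> A) : Prop :=
  [/\ (forall (r : R) (x y : A), d (r *: x + y) = r *: d x + d y),
      d 1 = 0 &
      (forall x y : A, d (x * y) = d x * y + x * d y + alpha * d x * d y)].

(* Main.v *)
Require Import Defs.
From HB Require Import structures.
From mathcomp Require Import all_boot all_order all_algebra.
From mathcomp Require Import mpoly.
From mathcomp Require Import ring.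
From Stdlib Require Import ClassicalEpsilon FunctionalExtensionality PropExtensionality.
Set Implicit Arguments. Unset Strict Implicit. Unset Printing Implicit Defensive.
Import GRing.Theory.
Local Open Scope ring_scope.

Record pideal (B : comPzRingType) := PIdeal {
  pmem :> B -> Prop;
  pmem0 : pmem 0;
  pmemD : forall x y, pmem x -> pmem y -> pmem (x + y);
  pmemM : forall a x, pmem x -> pmem (a * x) }.

Section PidealTheory.
Variables (B : comPzRingType) (K : pideal B).
Lemma pmemN x : K x -> K (- x).
Proof. by move=> h; rewrite -mulN1r; apply: pmemM. Qed.
Lemma pmemB x y : K x -> K y -> K (x - y).
Proof. by move=> hx hy; apply: pmemD => //; apply: pmemN. Qed.
Lemma pmemMr x a : K x -> K (x * a).
Proof. by move=> h; rewrite mulrC; apply: pmemM. Qed.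
End PidealTheory.

Definition canon (B : comPzRingType) (K : pideal B) (x : B) : B :=
  epsilon (inhabits 0) (fun z => K (x - z)).

Lemma canon_spec (B : comPzRingType) (K : pideal B) x : K (x - canon K x).
Proof.
rewrite /canon; apply: (epsilon_spec (inhabits 0) (fun z => K (x - z))).
by exists x; rewrite subrr; apply: pmem0.
Qed.

Lemma canon_eq (B : comPzRingType) (K : pideal B) x y : K (x - y) -> canon K x = canon K y.
Proof.
move=> h; rewrite /canon; congr epsilon; apply: functional_extensionality => z.
apply: propositional_extensionality; split => hz.
- have -> : y - z = (x - z) - (x - y) by ring.
  by apply: pmemB.
- have -> : x - z = (x - y) + (y - z) by ring.
  by apply: pmemD.
Qed.

Lemma canonP (B : comPzRingType) (K : pideal B) x : canon K (canon K x) == canon K x.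
Proof.
apply/eqP; apply: canon_eq.
have -> : canon K x - x = - (x - canon K x) by ring.
by apply: pmemN; apply: canon_spec.
Qed.

Definition quot (B : comPzRingType) (K : pideal B) := {x : B | canon K x == x}.
HB.instance Definition _ (B : comPzRingType) (K : pideal B) := Choice.on (quot K).

Section Quot.
Variables (B : comPzRingType) (K : pideal B).
Definition qpi (x : B) : quot K := exist _ (canon K x) (canonP K x).
Lemma qpiK (a : quot K) : qpi (val a) = a.
Proof. by apply: val_inj => /=; apply/eqP; case: a. Qed.
Lemma qpi_eq x y : K (x - y) -> qpi x = qpi y.
Proof. by move=> h; apply: val_inj => /=; apply: canon_eq. Qed.
Lemma qpi_eqP x y : qpi x = qpi y -> K (x - y).
Proof.
move/(congr1 val) => /= h.
have -> : x - y = (x - canon K x) - (y - canon K y) + (canon K x - canon K y) by ring.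
apply: pmemD; [apply: pmemB; apply: canon_spec | rewrite h subrr; apply: pmem0].
Qed.
Lemma qpi_canon x : K (x - val (qpi x)).
Proof. exact: canon_spec. Qed.

Definition qadd (a b : quot K) := qpi (val a + val b).
Definition qopp (a : quot K) := qpi (- val a).
Definition qmul (a b : quot K) := qpi (val a * val b).
Definition qzero := qpi 0.
Definition qone := qpi 1.

Lemma qpiD x y : qadd (qpi x) (qpi y) = qpi (x + y).
Proof.
apply: qpi_eq.
have -> : val (qpi x) + val (qpi y) - (x + y) = - (x - val (qpi x)) - (y - val (qpi y)) by ring.
by apply: pmemB; [apply: pmemN|]; apply: qpi_canon.
Qed.
Lemma qpiN x : qopp (qpi x) = qpi (- x).
Proof.
apply: qpi_eq.
have -> : - val (qpi x) - - x = (x - val (qpi x)) by ring.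
by apply: qpi_canon.
Qed.
Lemma qpiM x y : qmul (qpi x) (qpi y) = qpi (x * y).
Proof.
apply: qpi_eq.
have -> : val (qpi x) * val (qpi y) - (x * y) =
  - (val (qpi x) * (y - val (qpi y))) - (x - val (qpi x)) * y by ring.
by apply: pmemB; [apply: pmemN; apply: pmemM | apply: pmemMr]; apply: qpi_canon.
Qed.

Lemma qaddA : associative qadd.
Proof. by move=> a b c; rewrite -[a]qpiK -[b]qpiK -[c]qpiK !qpiD addrA. Qed.
Lemma qaddC : commutative qadd.
Proof. by move=> a b; rewrite -[a]qpiK -[b]qpiK !qpiD addrC. Qed.
Lemma qadd0 : left_id qzero qadd.
Proof. by move=> a; rewrite -[a]qpiK /qzero !qpiD add0r. Qed.
Lemma qaddN : left_inverse qzero qopp qadd.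
Proof. by move=> a; rewrite -[a]qpiK !qpiN !qpiD addNr. Qed.
HB.instance Definition _ := GRing.isZmodule.Build (quot K) qaddA qaddC qadd0 qaddN.
Lemma qmulA : associative qmul.
Proof. by move=> a b c; rewrite -[a]qpiK -[b]qpiK -[c]qpiK !qpiM mulrA. Qed.
Lemma qmulC : commutative qmul.
Proof. by move=> a b; rewrite -[a]qpiK -[b]qpiK !qpiM mulrC. Qed.
Lemma qmul1 : left_id qone qmul.
Proof. by move=> a; rewrite -[a]qpiK /qone !qpiM mul1r. Qed.
Lemma qmulDl : left_distributive qmul (@GRing.add (quot K)).
Proof.
move=> a b c; change (qmul (qadd a b) c = qadd (qmul a c) (qmul b c)).
rewrite -[a]qpiK -[b]qpiK -[c]qpiK qpiD !qpiM. by rewrite mulrDl -qpiD.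
Qed.
HB.instance Definition _ := GRing.Zmodule_isComPzRing.Build (quot K) qmulA qmulC qmul1 qmulDl.

Lemma qpi_nmod : nmod_morphism qpi.
Proof. by split => // x y; rewrite -qpiD. Qed.
Lemma qpi_monoid : monoid_morphism qpi.
Proof. by split => // x y; rewrite -qpiM. Qed.
HB.instance Definition _ := GRing.isNmodMorphism.Build B (quot K) qpi qpi_nmod.
HB.instance Definition _ := GRing.isMonoidMorphism.Build B (quot K) qpi qpi_monoid.

Lemma qpi0P x : qpi x = 0 -> K x.
Proof. by move=> h; rewrite -[x]subr0; apply: qpi_eqP; rewrite h rmorph0. Qed.
Lemma qpi0 x : K x -> qpi x = 0.
Proof. by move=> h; rewrite -(rmorph0 qpi); apply: qpi_eq; rewrite subr0. Qed.
End Quot.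


Section QMap.
Variables (B : comPzRingType) (K L : pideal B) (hKL : forall x, K x -> L x).
Definition qmap_of (h : forall x, K x -> L x) (q : quot K) : quot L := qpi L (val q).
Local Notation qmap := (qmap_of hKL).
Lemma qmap_pi x : qmap (qpi K x) = qpi L x.
Proof.
apply: qpi_eq; apply: hKL.
have -> : val (qpi K x) - x = - (x - val (qpi K x)) by ring.
by apply: pmemN; apply: qpi_canon.
Qed.
Lemma qmap_nmod : nmod_morphism qmap.
Proof.
split; first by rewrite -(rmorph0 (qpi K)) qmap_pi rmorph0.
by move=> a b; rewrite -[a]qpiK -[b]qpiK -rmorphD !qmap_pi rmorphD.
Qed.
Lemma qmap_monoid : monoid_morphism qmap.
Proof.
split; first by rewrite -(rmorph1 (qpi K)) qmap_pi rmorph1.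
by move=> a b; rewrite -[a]qpiK -[b]qpiK -rmorphM !qmap_pi rmorphM.
Qed.
HB.instance Definition _ := GRing.isNmodMorphism.Build (quot K) (quot L) qmap qmap_nmod.
HB.instance Definition _ := GRing.isMonoidMorphism.Build (quot K) (quot L) qmap qmap_monoid.
Lemma qmap_surj (c : quot L) : exists c', qmap c' = c.
Proof. by exists (qpi K (val c)); rewrite qmap_pi qpiK. Qed.
Lemma qmap0P (c : quot K) : qmap c = 0 -> L (val c).
Proof. by move=> h; apply: qpi0P. Qed.
End QMap.

Definition teps (A : comPzRingType) (al : A) := (A * A)%type.
HB.instance Definition _ (A : comPzRingType) (al : A) := GRing.Zmodule.on (teps al).
Section Teps.
Variables (A : comPzRingType) (al : A).
Definition tmul (u v : teps al) : teps al :=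
  (u.1 * v.1, u.2 * v.1 + u.1 * v.2 + al * u.2 * v.2).
Definition tone : teps al := (1, 0).
Lemma tmulA : associative tmul.
Proof. by move=> [a b] [c e] [g h]; rewrite /tmul /=; congr pair; ring. Qed.
Lemma tmulC : commutative tmul.
Proof. by move=> [a b] [c e]; rewrite /tmul /=; congr pair; ring. Qed.
Lemma tmul1 : left_id tone tmul.
Proof. by move=> [a b]; rewrite /tmul /=; congr pair; ring. Qed.
Lemma tmulDl : left_distributive tmul (@GRing.add (teps al)).
Proof.
move=> [a b] [c e] [g h]; rewrite /tmul /=.
transitivity ((a * g + c * g, (b * g + a * h + al * b * h) + (e * g + c * h + al * e * h)) : A * A); last by [].
by congr pair; ring.
Qed.

HB.instance Definition _ := GRing.Zmodule_isComPzRing.Build (teps al) tmulA tmulC tmul1 tmulDl.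
Lemma tepsM (u v : teps al) : u * v = (u.1 * v.1, u.2 * v.1 + u.1 * v.2 + al * u.2 * v.2).
Proof. by []. Qed.
Lemma teps1 : (1 : teps al) = (1, 0).
Proof. by []. Qed.
Lemma tepsD (u v : teps al) : u + v = (u.1 + v.1, u.2 + v.2).
Proof. by []. Qed.
Lemma tepsN (u : teps al) : - u = (- u.1, - u.2).
Proof. by []. Qed.
Lemma teps0 : (0 : teps al) = (0, 0).
Proof. by []. Qed.
End Teps.

Lemma sum_closed (T : eqType) (B : comPzRingType) (P : B -> Prop) (s : seq T) (F : T -> B) :
  P 0 -> (forall x y, P x -> P y -> P (x + y)) ->
  (forall p, p \in s -> P (F p)) -> P (\sum_(p <- s) F p).
Proof.
move=> P0 PD; elim: s => [|x s IH] H; first by rewrite big_nil.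
rewrite big_cons; apply: PD; first by apply: H; rewrite inE eqxx.
by apply: IH => p hp; apply: H; rewrite inE hp orbT.
Qed.

Section Ipow.
Variables (A : comNzRingType) (I : A -> Prop).
Hypothesis HI : is_ideal I.

Lemma ipow0 n : ideal_pow I n 0.
Proof. by case: n => [|n] //=; exists [::]; rewrite big_nil. Qed.

Lemma ipowD n x y : ideal_pow I n x -> ideal_pow I n y -> ideal_pow I n (x + y).
Proof.
case: n => [|n] //= [s [Hs ->]] [s' [Hs' ->]]; exists (s ++ s'); rewrite big_cat; split => //.
by move=> p; rewrite mem_cat => /orP [] ?; [apply: Hs | apply: Hs'].
Qed.

Lemma ipowM n a x : ideal_pow I n x -> ideal_pow I n (a * x).
Proof.
elim: n a x => [|n IH] a x //= [s [Hs ->]].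
exists (map (fun p => (a * p.1, p.2)) s); split.
- by move=> p /mapP [q hq ->] /=; have [h1 h2] := Hs q hq; split => //; apply: IH.
- by rewrite big_map mulr_sumr; apply: eq_bigr => p _; rewrite mulrA.
Qed.

Lemma ipowMr n a x : ideal_pow I n x -> ideal_pow I n (x * a).
Proof. by rewrite mulrC; apply: ipowM. Qed.

Lemma ipowS n x : ideal_pow I n.+1 x -> ideal_pow I n x.
Proof.
move=> /= [s [Hs ->]]; apply: sum_closed; [exact: ipow0 | exact: ipowD |].
by move=> p hp; apply: ipowMr; case: (Hs p hp).
Qed.

Lemma ipow_le m n x : (m <= n)%N -> ideal_pow I n x -> ideal_pow I m x.
Proof.
elim: n x => [|n IH] x; first by rewrite leqn0 => /eqP ->.
rewrite leq_eqVlt => /orP [/eqP -> //| hm] h.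
by apply: IH => //; apply: ipowS.
Qed.

Lemma ipow_mulI n x y : ideal_pow I n x -> I y -> ideal_pow I n.+1 (x * y).
Proof.
move=> hx hy; exists [:: (x, y)]; rewrite big_seq1; split => //.
by move=> p; rewrite inE => /eqP ->.
Qed.
End Ipow.

Section Deriv.
Variables (R : comPzRingType) (A : comAlgType R) (I : A -> Prop) (alpha : A) (d : A -> A).
Hypothesis Hd : is_alpha_derivation alpha d.

Lemma dD x y : d (x + y) = d x + d y.
Proof. by case: Hd => h _ _; have := h 1 x y; rewrite !scale1r. Qed.
Lemma d0 : d 0 = 0.
Proof. by apply: (addrI (d 0)); rewrite -dD !addr0. Qed.
Lemma d1 : d 1 = 0.
Proof. by case: Hd. Qed.
Lemma dM x y : d (x * y) = d x * y + x * d y + alpha * d x * d y.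
Proof. by case: Hd. Qed.
Lemma dsum (T : Type) (s : seq T) (F : T -> A) : d (\sum_(p <- s) F p) = \sum_(p <- s) d (F p).
Proof. by apply: (big_morph d dD d0). Qed.

Definition Mset m j (z : A) := exists p t, ideal_pow I m p /\ z = p + alpha ^+ j * t.

Lemma Mset0 m j : Mset m j 0.
Proof. by exists 0, 0; rewrite mulr0 addr0; split => //; apply: ipow0. Qed.
Lemma MsetD m j x y : Mset m j x -> Mset m j y -> Mset m j (x + y).
Proof.
move=> [p [t [hp ->]]] [p' [t' [hp' ->]]]; exists (p + p'), (t + t'); split.
  by apply: ipowD.
by rewrite mulrDr; ring.
Qed.
Lemma MsetM m j a x : Mset m j x -> Mset m j (a * x).
Proof.
move=> [p [t [hp ->]]]; exists (a * p), (a * t); split; first by apply: ipowM.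
by ring.
Qed.
Lemma Mset_pow m j x : ideal_pow I m x -> Mset m j x.
Proof. by move=> h; exists x, 0; rewrite mulr0 addr0. Qed.
Lemma Mset_j0 m x : Mset m 0 x.
Proof. by exists 0, x; rewrite expr0 mul1r add0r; split => //; apply: ipow0. Qed.
Lemma Mset_m0 j x : Mset 0 j x.
Proof. by exists x, 0; rewrite mulr0 addr0. Qed.

Lemma dbound N a : ideal_pow I N a -> forall m j, (m + j)%N = N -> Mset m j (d a).
Proof.
elim: N a => [|N IH] a.
  move=> _ m j; move/eqP; rewrite addn_eq0 => /andP [/eqP -> /eqP ->]; exact: Mset_j0.
move=> /= [s [Hs ->]] m j hmj; rewrite dsum.
apply: sum_closed; [exact: Mset0 | exact: MsetD |].
move=> p hp; have [h1 h2] := Hs p hp.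
case: j hmj => [|j] hmj; first exact: Mset_j0.
rewrite dM; apply: MsetD; [apply: MsetD|].
- case: m hmj => [|m] hmj; first exact: Mset_m0.
  have e : (m + j.+1)%N = N by move: hmj; rewrite addSn => -[].
  have [q [t [hq ->]]] := IH _ h1 m j.+1 e.
  exists (q * p.2), (t * p.2); split; first by apply: ipow_mulI.
  by ring.
- rewrite mulrC; apply: MsetM; apply: Mset_pow; apply: (ipow_le (m := m) (n := N)) => //.
  by move: hmj; rewrite addnS => -[] <-; apply: leq_addr.
- have e : (m + j)%N = N by move: hmj; rewrite addnS => -[].
  have [q [t [hq hd]]] := IH _ h1 m j e. rewrite hd.
  exists (alpha * q * d p.2), (t * d p.2); split.
    by rewrite mulrC; do 2 apply: ipowM.
  by rewrite exprS; ring.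
Qed.
End Deriv.

Section Main.
Variables (R : comPzRingType) (A A' : comAlgType R) (I : A -> Prop)
  (f : {lrmorphism A -> A'}) (alpha : A) (d : A -> A).
Hypothesis Hd : is_alpha_derivation alpha d.

Local Notation al := (f alpha).
Definition J n : A' -> Prop := ext_ideal f (ideal_pow I n).

Lemma J0 n : J n 0.
Proof. by exists [::]; rewrite big_nil. Qed.
Lemma JD n x y : J n x -> J n y -> J n (x + y).
Proof.
move=> [s [Hs ->]] [s' [Hs' ->]]; exists (s ++ s'); rewrite big_cat; split => //.
by move=> p; rewrite mem_cat => /orP [] ?; [apply: Hs | apply: Hs'].
Qed.
Lemma JM n a x : J n x -> J n (a * x).
Proof.
move=> [s [Hs ->]]; exists (map (fun p => (p.1, a * p.2)) s); split.
- by move=> p /mapP [q hq ->] /=; apply: Hs.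
- by rewrite big_map mulr_sumr; apply: eq_bigr => p _ /=; ring.
Qed.
Lemma JMr n a x : J n x -> J n (x * a).
Proof. by rewrite mulrC; apply: JM. Qed.
Lemma JN n x : J n x -> J n (- x).
Proof. by move=> h; rewrite -mulN1r; apply: JM. Qed.
Lemma JB n x y : J n x -> J n y -> J n (x - y).
Proof. by move=> hx hy; apply: JD => //; apply: JN. Qed.
Lemma J_f n a : ideal_pow I n a -> J n (f a).
Proof.
move=> h; exists [:: (a, 1)]; rewrite big_seq1 mulr1; split => //.
by move=> p; rewrite inE => /eqP ->.
Qed.
Lemma JS n x : J n.+1 x -> J n x.
Proof. by move=> [s [Hs ->]]; exists s; split => // p /Hs; apply: ipowS. Qed.

Definition Mj n j (z : A') := exists p t, J n p /\ z = p + al ^+ j * t.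
Lemma Mj0 n j : Mj n j 0.
Proof. by exists 0, 0; rewrite mulr0 addr0; split => //; apply: J0. Qed.
Lemma MjD n j x y : Mj n j x -> Mj n j y -> Mj n j (x + y).
Proof.
move=> [p [t [hp ->]]] [p' [t' [hp' ->]]]; exists (p + p'), (t + t'); split.
  by apply: JD.
by ring.
Qed.
Lemma MjM n j a x : Mj n j x -> Mj n j (a * x).
Proof.
move=> [p [t [hp ->]]]; exists (a * p), (a * t); split; first by apply: JM.
by ring.
Qed.
Lemma MjN n j x : Mj n j x -> Mj n j (- x).
Proof. by move=> h; rewrite -mulN1r; apply: MjM. Qed.
Lemma MjB n j x y : Mj n j x -> Mj n j y -> Mj n j (x - y).
Proof. by move=> hx hy; apply: MjD => //; apply: MjN. Qed.
Lemma Mj_J n j x : J n x -> Mj n j x.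
Proof. by move=> h; exists x, 0; rewrite mulr0 addr0. Qed.
Lemma Mj_j0 n x : Mj n 0 x.
Proof. by exists 0, x; rewrite expr0 mul1r add0r; split => //; apply: J0. Qed.
Lemma MjS n j x : Mj n j.+1 x -> Mj n j x.
Proof. by move=> [p [t [hp ->]]]; exists p, (al * t); rewrite exprSr -mulrA. Qed.
Lemma Mj_top n j x : J n (al ^+ j) -> Mj n j x -> J n x.
Proof. by move=> hj [p [t [hp ->]]]; apply: JD => //; apply: JMr. Qed.

Definition Kpred n j (u : teps al) := J n u.1 /\ Mj n j u.2.
Lemma Kp0 n j : Kpred n j 0.
Proof. by split; [apply: J0 | apply: Mj0]. Qed.
Lemma KpD n j x y : Kpred n j x -> Kpred n j y -> Kpred n j (x + y).
Proof. by move=> [h1 h2] [h3 h4]; split; [apply: JD | apply: MjD]. Qed.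
Lemma KpM n j a x : Kpred n j x -> Kpred n j (a * x).
Proof.
move=> [h1 h2]; split; rewrite tepsM /=; first by apply: JM.
apply: MjD; [apply: MjD|]; first by apply: Mj_J; apply: JM.
  by apply: MjM.
by apply: MjM.
Qed.
Definition Kp n j : pideal (teps al) := PIdeal (@Kp0 n j) (@KpD n j) (@KpM n j).
Lemma Kp_le n j x : Kp n j.+1 x -> Kp n j x.
Proof. by move=> [h1 h2]; split => //; apply: MjS. Qed.
Lemma Kp_sq n j u v : Kp n j u -> Kp n j v -> Kp n j.+1 (u * v).
Proof.
move=> [h1 [p [t [hp e2]]]] [h3 [p' [t' [hp' e4]]]]; split; rewrite tepsM /=.
  by apply: JM.
apply: MjD; [apply: MjD|]; first by apply: Mj_J; apply: JM.
  by apply: Mj_J; apply: JMr.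
rewrite e2 e4.
exists (al * p * v.2 + al * al ^+ j * t * p'), (al ^+ j * t * t'); split.
  by apply: JD; [apply: JMr; apply: JM | apply: JM].
by rewrite e4 exprS; ring.
Qed.

Definition Cq n j := quot (Kp n j).

Definition Hyp n j (e : A' -> A') :=
  [/\ forall x y, Mj n j (e (x + y) - (e x + e y)),
      forall x y, Mj n j (e (x * y) - (e x * y + x * e y + al * e x * e y)) &
      forall a, Mj n j (e (f a) - f (d a))].

Lemma Hyp_S n j e : Hyp n j.+1 e -> Hyp n j e.
Proof. by case=> h1 h2 h3; split => *; apply: MjS. Qed.

Definition Wmap n j (e : A' -> A') (y : A') : quot (Kp n j) := qpi (Kp n j) ((y, e y) : teps al).

Lemma Wmap_nmod n j e : Hyp n j e -> nmod_morphism (Wmap n j e).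
Proof.
case=> hD hM hF; split.
  apply: qpi0; split; first exact: J0.
  have := hD 0 0; rewrite addr0 => h.
  have -> : e 0 = - (e 0 - (e 0 + e 0)) by ring.
  by apply: MjN.
move=> x y; rewrite /Wmap -rmorphD; apply: qpi_eq; split => /=.
  by rewrite subrr; apply: J0.
exact: hD.
Qed.

Lemma Wmap_monoid n j e : Hyp n j e -> monoid_morphism (Wmap n j e).
Proof.
case=> hD hM hF; split.
  rewrite /Wmap -(rmorph1 (qpi (Kp n j))); apply: qpi_eq; split => /=.
    by rewrite subrr; apply: J0.
  by have := hF 1; rewrite rmorph1 (d1 Hd) rmorph0 subr0.
move=> x y; rewrite /Wmap -rmorphM; apply: qpi_eq; split => /=.
  by rewrite subrr; apply: J0.
exact: hM.
Qed.

Definition Wr n j e (h : Hyp n j e) : {rmorphism A' -> quot (Kp n j)} :=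
  HB.pack (Wmap n j e) (GRing.isNmodMorphism.Build _ _ _ (Wmap_nmod h))
    (GRing.isMonoidMorphism.Build _ _ _ (Wmap_monoid h)).

Lemma WrE n j e (h : Hyp n j e) y : Wr h y = qpi (Kp n j) ((y, e y) : teps al).
Proof. by []. Qed.

Definition phi (a : A) : teps al := (f a, f (d a)).
Lemma phi_nmod : nmod_morphism phi.
Proof.
split; first by rewrite /phi (d0 Hd) !rmorph0.
by move=> x y; rewrite /phi (dD Hd) !rmorphD.
Qed.
Lemma phi_monoid : monoid_morphism phi.
Proof.
split; first by rewrite /phi (d1 Hd) rmorph0 rmorph1.
move=> x y; rewrite /phi (dM Hd) tepsM /=; congr pair; first by rewrite rmorphM.
by rewrite !rmorphD !rmorphM.
Qed.
Definition Umap n j (a : A) : quot (Kp n j) := qpi (Kp n j) (phi a).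
Lemma Umap_nmod n j : nmod_morphism (Umap n j).
Proof.
split; first by rewrite /Umap (fst phi_nmod) rmorph0.
by move=> x y; rewrite /Umap (snd phi_nmod) rmorphD.
Qed.
Lemma Umap_monoid n j : monoid_morphism (Umap n j).
Proof.
split; first by rewrite /Umap (fst phi_monoid) rmorph1.
by move=> x y; rewrite /Umap (snd phi_monoid) rmorphM.
Qed.
Definition Ur n j : {rmorphism A -> quot (Kp n j)} :=
  HB.pack (Umap n j) (GRing.isNmodMorphism.Build _ _ _ (@Umap_nmod n j))
    (GRing.isMonoidMorphism.Build _ _ _ (@Umap_monoid n j)).

Lemma Ur_kill n j a : ideal_pow I (n + j) a -> Ur n j a = 0.
Proof.
move=> h; apply: qpi0; split => /=.
  by apply: J_f; apply: (ipow_le (n := (n + j)%N)) => //; apply: leq_addr.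
have [p [t [hp ->]]] := dbound Hd h (erefl (n + j)%N).
rewrite rmorphD rmorphM rmorphXn; exists (f p), (f t); split => //.
exact: J_f.
Qed.

Lemma Wr_f n j e (h : Hyp n j e) a : Wr h (f a) = Ur n j a.
Proof.
rewrite WrE; apply: qpi_eq; split => /=; first by rewrite subrr; apply: J0.
by case: h => _ _ hF; apply: hF.
Qed.

Lemma kill_lemma (C : comPzRingType) (g : {rmorphism A' -> C}) N :
  (forall a, ideal_pow I N a -> g (f a) = 0) -> forall y, J N y -> g y = 0.
Proof.
move=> hg y [s [Hs ->]]; rewrite rmorph_sum big1_seq // => p hp.
by rewrite rmorphM hg ?mul0r //; apply: Hs.
Qed.


Hypothesis Het : forall n, (1 <= n)%N -> etale_mod f I n.

Lemma sqzero n j (c c' : quot (Kp n j.+1)) :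
  qmap_of (@Kp_le n j) c = 0 -> qmap_of (@Kp_le n j) c' = 0 -> c * c' = 0.
Proof.
move=> /qmap0P h /qmap0P h'.
rewrite -[c]qpiK -[c']qpiK -rmorphM; apply: qpi0; exact: Kp_sq.
Qed.

Lemma compat n j e (h : Hyp n j e) a :
  qmap_of (@Kp_le n j) (Ur n j.+1 a) = Wr h (f a).
Proof. by rewrite Wr_f /= /Umap qmap_pi. Qed.

Lemma uniq_lift n j : forall e1 e2, Hyp n j e1 -> Hyp n j e2 -> forall y, Mj n j (e1 y - e2 y).
Proof.
elim: j => [|j IH] e1 e2 h1 h2 y; first exact: Mj_j0.
have hN : (1 <= n + j.+1)%N by rewrite addnS.
have [Het' _] := Het hN.
have h1' := Hyp_S h1; have h2' := Hyp_S h2.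
have ukill : forall a, ideal_pow I (n + j.+1) a -> Ur n j.+1 a = 0 by move=> a; apply: Ur_kill.
have vkill : forall y, J (n + j.+1) y -> Wr h1' y = 0.
  apply: kill_lemma => a ha; rewrite -compat.
  by rewrite ukill // rmorph0.
have [w [_ _ _ wuniq]] := Het' _ _ _ (@qmap_surj _ _ _ (@Kp_le n j)) (@sqzero n j)
  (Ur n j.+1) (Wr h1') ukill vkill (compat h1').
have E1 := wuniq (Wr h1) (kill_lemma (fun a ha => etrans (Wr_f h1 a) (ukill a ha)))
  (fun y => etrans (qmap_pi _ _) (erefl (Wr h1' y))) (Wr_f h1) y.
have E2 := wuniq (Wr h2) (kill_lemma (fun a ha => etrans (Wr_f h2 a) (ukill a ha))).
have E2' : forall y, qmap_of (@Kp_le n j) (Wr h2 y) = Wr h1' y.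
  move=> z; rewrite /= /Wmap qmap_pi; apply: qpi_eq; split => /=.
    by rewrite subrr; apply: J0.
  by have := IH e1 e2 h1' h2' z => /MjN; rewrite opprB.
have {}E2 := E2 E2' (Wr_f h2) y.
have : Wr h1 y = Wr h2 y by rewrite E1 E2.
by rewrite !WrE => /qpi_eqP [_ /= hh].
Qed.


Lemma exist_lift n j : exists e, Hyp n j e.
Proof.
elim: j => [|j [e h]].
  by exists (fun _ => 0); split => *; apply: Mj_j0.
have hN : (1 <= n + j.+1)%N by rewrite addnS.
have [Het' _] := Het hN.
have ukill : forall a, ideal_pow I (n + j.+1) a -> Ur n j.+1 a = 0 by move=> a; apply: Ur_kill.
have vkill : forall y, J (n + j.+1) y -> Wr h y = 0.
  apply: kill_lemma => a ha; rewrite -compat.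
  by rewrite ukill // rmorph0.
have [w [_ wpi wf _]] := Het' _ _ _ (@qmap_surj _ _ _ (@Kp_le n j)) (@sqzero n j)
  (Ur n j.+1) (Wr h) ukill vkill (compat h).
pose e' := fun y => (val (w y)).2.
have E : forall y, w y = qpi (Kp n j.+1) ((y, e' y) : teps al).
  move=> y; rewrite -[w y]qpiK; apply: qpi_eq; split => /=; last first.
    by rewrite /e' subrr; apply: Mj0.
  have := wpi y; rewrite WrE /= /qmap_of => /qpi_eqP [hh _].
  by move: hh; rewrite /=.
exists e'; split.
- move=> x y; have := rmorphD w x y; rewrite !E -rmorphD => /qpi_eqP [_ hh].
  exact: hh.
- move=> x y; have := rmorphM w x y; rewrite !E -rmorphM => /qpi_eqP [_ hh].
  exact: hh.
- move=> a; have := wf a; rewrite E /= /Umap => /qpi_eqP [_ hh].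
  exact: hh.
Qed.


Hypothesis Hnil : adically_nilpotent I alpha.
Hypothesis Hcomp : adically_complete f I.
Hypothesis Hsep : adically_separated f I.

Definition HypJ n (e : A' -> A') :=
  [/\ forall x y, J n (e (x + y) - (e x + e y)),
      forall x y, J n (e (x * y) - (e x * y + x * e y + al * e x * e y)) &
      forall a, J n (e (f a) - f (d a))].

Lemma HypJ_Hyp n j e : HypJ n e -> Hyp n j e.
Proof. by case=> h1 h2 h3; split => *; apply: Mj_J. Qed.
Lemma HypJ_S n e : HypJ n.+1 e -> HypJ n e.
Proof. by case=> h1 h2 h3; split => *; apply: JS. Qed.

Lemma top_pow n : exists k, J n (al ^+ k).
Proof. by have [k hk] := Hnil n; exists k; rewrite -rmorphXn; apply: J_f. Qed.

Lemma uniqJ n e e' : HypJ n e -> HypJ n e' -> forall y, J n (e y - e' y).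
Proof.
move=> h h' y; have [k hk] := top_pow n.
exact: Mj_top hk (uniq_lift (HypJ_Hyp k h) (HypJ_Hyp k h') y).
Qed.

Lemma existJ n : exists e, HypJ n e.
Proof.
have [k hk] := top_pow n; have [e [h1 h2 h3]] := exist_lift n k.
by exists e; split => *; apply: Mj_top hk _.
Qed.

Definition delta n : A' -> A' := proj1_sig (constructive_indefinite_description _ (existJ n)).
Lemma deltaP n : HypJ n (delta n).
Proof. exact: (proj2_sig (constructive_indefinite_description _ (existJ n))). Qed.

Lemma delta_cauchy y n : J n (delta n.+1 y - delta n y).
Proof. exact: uniqJ (HypJ_S (deltaP n.+1)) (deltaP n) y. Qed.

Definition dlim (y : A') : A' :=
  proj1_sig (constructive_indefinite_description _ (@Hcomp (fun n => delta n y) (@delta_cauchy y))).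
Lemma dlimP y n : J n (dlim y - delta n y).
Proof.
exact: (proj2_sig (constructive_indefinite_description _ (@Hcomp (fun n => delta n y) (@delta_cauchy y))) n).
Qed.

Lemma sep_eq (u v : A') : (forall n, J n (u - v)) -> u = v.
Proof. by move=> h; apply/eqP; rewrite -subr_eq0; apply/eqP; apply: Hsep. Qed.

Lemma dlimD x y : dlim (x + y) = dlim x + dlim y.
Proof.
apply: sep_eq => n; have [h1 _ _] := deltaP n.
have -> : dlim (x + y) - (dlim x + dlim y) =
  (delta n (x + y) - (delta n x + delta n y)) + (dlim (x + y) - delta n (x + y))
  - (dlim x - delta n x) - (dlim y - delta n y) by ring.
apply: JB; [apply: JB; [apply: JD|]|].
- exact: h1.
- exact: dlimP.
- exact: dlimP.
- exact: dlimP.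
Qed.

Lemma dlimM x y : dlim (x * y) = dlim x * y + x * dlim y + al * dlim x * dlim y.
Proof.
apply: sep_eq => n; have [_ h2 _] := deltaP n.
have -> : dlim (x * y) - (dlim x * y + x * dlim y + al * dlim x * dlim y) =
  (delta n (x * y) - (delta n x * y + x * delta n y + al * delta n x * delta n y))
  + (dlim (x * y) - delta n (x * y)) - (dlim x - delta n x) * y - x * (dlim y - delta n y)
  - al * ((dlim x - delta n x) * dlim y + delta n x * (dlim y - delta n y)) by ring.
apply: JB; [apply: JB; [apply: JB; [apply: JD|]|]|].
- exact: h2.
- exact: dlimP.
- by apply: JMr; apply: dlimP.
- by apply: JM; apply: dlimP.
- by apply: JM; apply: JD; [apply: JMr | apply: JM]; apply: dlimP.
Qed.

Lemma dlimF a : dlim (f a) = f (d a).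
Proof.
apply: sep_eq => n; have [_ _ h3] := deltaP n.
have -> : dlim (f a) - f (d a) = (dlim (f a) - delta n (f a)) + (delta n (f a) - f (d a)) by ring.
by apply: JD; [apply: dlimP | apply: h3].
Qed.

Lemma exact_uniq (e : A' -> A') :
  (forall x y, e (x + y) = e x + e y) ->
  (forall x y, e (x * y) = e x * y + x * e y + al * e x * e y) ->
  (forall a, e (f a) = f (d a)) -> forall y, e y = dlim y.
Proof.
move=> hD hM hF y; apply: sep_eq => n.
have hJ : HypJ n e by split => *; rewrite ?hD ?hM ?hF subrr; apply: J0.
have -> : e y - dlim y = (e y - delta n y) - (dlim y - delta n y) by ring.
by apply: JB; [apply: uniqJ hJ (deltaP n) y | apply: dlimP].
Qed.


Lemma main_result : exists d' : A' -> A',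
    [/\ is_alpha_derivation al d',
        (forall x : A, d' (f x) = f (d x)) &
        (forall d'' : A' -> A', is_alpha_derivation al d'' ->
           (forall x : A, d'' (f x) = f (d x)) -> forall y, d'' y = d' y)].
Proof.
have hr : forall r : R, d (r *: 1) = 0.
  move=> r; case: Hd => hl h1 _; have := hl r 1 0.
  by rewrite addr0 h1 scaler0 (d0 Hd) addr0.
have fr : forall (r : R) (x : A'), r *: x = f (r *: 1) * x.
  by move=> r x; rewrite linearZ rmorph1 -scalerAl mul1r.
exists dlim; split.
- split.
  + move=> r x y; rewrite dlimD; congr (_ + _).
    rewrite fr dlimM dlimF hr rmorph0 !mulr0 !mul0r !addr0 !add0r.
    by rewrite -fr.
  + by rewrite -(rmorph1 f) dlimF (d1 Hd) rmorph0.
  + exact: dlimM.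
- exact: dlimF.
- move=> d'' [hl h1 hm] hf; apply: exact_uniq => //.
  by move=> x y; have := hl 1 x y; rewrite !scale1r.
Qed.

End Main.

Unset Implicit Arguments.

Theorem proposition5p12 (R : comPzRingType) (A A' : comAlgType R)
    (I : A -> Prop) (f : {lrmorphism A -> A'}) (alpha : A) :
  is_ideal I ->
  adically_complete f I -> adically_separated f I ->
  (forall n, (1 <= n)%N -> etale_mod f I n) ->
  adically_nilpotent I alpha ->
  forall d : A -> A, is_alpha_derivation alpha d ->
  exists d' : A' -> A',
    [/\ is_alpha_derivation (f alpha) d',
        (forall x : A, d' (f x) = f (d x)) &
        (forall d'' : A' -> A', is_alpha_derivation (f alpha) d'' ->
           (forall x : A, d'' (f x) = f (d x)) -> forall y, d'' y = d' y)].
Proof.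
move=> _ Hcomp Hsep Het Hnil d Hd.
exact: (main_result Hd Het Hnil Hcomp Hsep).
Qed.
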